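(* Let $0<q<1$ and take $p=q$. Let $\tilde P_n(x)=\sum_{k=0}^n\tilde b_{k,n}x^k$ be the orthonormal polynomials (positive leading coefficients) for the moment sequence $\tilde s_0=q^{-1/2}(1-(1-q))=q^{1/2}$, $\tilde s_n=(q;q)_nq^{-(n+1)^2/2}$ ($n\ge1$), and let $b_{k,n}=(-1)^{n+k}q^{n/2+1/4}\begin{bmatrix}n\\k\end{bmatrix}_q\frac{q^{k^2+k/2}}{(q;q)_k}$ be the coefficients of the orthonormal polynomials for $s_n=(q;q)_nq^{-(n+1)^2/2}$. Then for $0\le k\le n$, \[ \tilde b_{k,n}=\tilde C_n (-1)^k\begin{bmatrix}n\\k\end{bmatrix}_q \frac{q^{k^2+k/2}}{(q;q)_{k+1}}\left[1-q^{k+1}-(1-q^k)(1-q^{n+1})\right],\qquad \tilde C_n=(-1)^n q^{-n/2-1/4}, \] i.e. $\tilde b_{k,n}=b_{k,n}\,q^{-n-1/2}\left[1-\frac{(1-q^k)(1-q^{n+1})}{1-q^{k+1}}\right]$. Moreover $\tilde D_n=q^{n+1}D_n$ where $D_n=\det(s_{i+j})_{0\le i,j\le n}$, $\tilde D_n=\det(\tilde s_{i+j})_{0\le i,j\le n}$. Finally, the monic polynomials $\tilde p_n=\tilde P_n/\tilde b_{n,n}$ satisfy $\tilde p_n(x)=(x-\tilde c_n)\tilde p_{n-1}(x)-\tilde\lambda_n\tilde p_{n-2}(x)$ ($n\ge1$, $\tilde p_{-1}=0$, $\tilde p_0=1$) with \[ \tilde c_n=\left(1+q^3-(1+q^2)q^n\right)q^{-2n-1/2},\qquad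 \tilde \lambda_{n+1}=(1-q^n)^2q^{-4n}. \]
   Context: $(a;q)_n=\prod_{k=1}^n(1-aq^{k-1})$ for $n\in\{0,1,\dots\}\cup\{\infty\}$; $\begin{bmatrix}n\\k\end{bmatrix}_q=\frac{(q;q)_n}{(q;q)_k(q;q)_{n-k}}$. Orthonormal polynomials for a positive definite moment sequence $(u_n)$ are $P_n(x)=\frac{1}{\sqrt{E_{n-1}E_n}}\det\begin{pmatrix}u_0&\cdots&u_n\\ \vdots&&\vdots\\ u_{n-1}&\cdots&u_{2n-1}\\ 1&\cdots&x^n\end{pmatrix}$, $E_n=\det(u_{i+j})_{0\le i,j\le n}$, $E_{-1}=1$. *)

(* Defs.v *)
From HB Require Import structures.
From mathcomp Require Import all_boot all_order all_algebra.
Set Implicit Arguments. Unset Strict Implicit. Unset Printing Implicit Defensive.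
Import Order.TTheory GRing.Theory Num.Theory.
Local Open Scope ring_scope.

Section Defs.
Variable R : rcfType.

Definition qpoch (a q : R) (n : nat) : R := \prod_(k < n) (1 - a * q ^+ k).

Definition qbinom (q : R) (n k : nat) : R :=
  qpoch q q n / (qpoch q q k * qpoch q q (n - k)).

Definition hankel_det (u : nat -> R) (n : nat) : R :=
  \det (\matrix_(i < n.+1, j < n.+1) u (i + j)%N).

Definition hankel_det_prev (u : nat -> R) (n : nat) : R :=
  if n is m.+1 then hankel_det u m else 1.

Definition orthonormal_poly (u : nat -> R) (n : nat) : {poly R} :=
  (Num.sqrt (hankel_det_prev u n * hankel_det u n))^-1 *:
  \det (\matrix_(i < n.+1, j < n.+1)
          (if (i < n)%N then (u (i + j)%N)%:P else 'X^j)).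

Definition mom_s (q : R) (n : nat) : R :=
  qpoch q q n * (Num.sqrt q) ^- ((n.+1) ^ 2).

Definition mom_st (q : R) (n : nat) : R :=
  if n is 0 then (Num.sqrt q)^-1 * (1 - (1 - q)) else mom_s q n.

Definition bcoef (q : R) (k n : nat) : R :=
  (-1) ^+ (n + k) * ((Num.sqrt q) ^+ n * Num.sqrt (Num.sqrt q)) * qbinom q n k
  * (q ^+ (k ^ 2) * (Num.sqrt q) ^+ k) / qpoch q q k.

Definition Ct (q : R) (n : nat) : R :=
  (-1) ^+ n * ((Num.sqrt q) ^+ n * Num.sqrt (Num.sqrt q))^-1.

Definition ct (q : R) (n : nat) : R :=
  (1 + q ^+ 3 - (1 + q ^+ 2) * q ^+ n) * (q ^+ (2 * n) * Num.sqrt q)^-1.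

(* tilde lambda_{n+1} = (1-q^n)^2 q^{-4n}; indexed so that lt q n = tilde lambda_n *)
Definition lt_coef (q : R) (n : nat) : R :=
  (1 - q ^+ n.-1) ^+ 2 * (q ^+ (4 * n.-1))^-1.

Definition monic_pt (q : R) (n : nat) : {poly R} :=
  ((orthonormal_poly (mom_st q) n)`_n)^-1 *: orthonormal_poly (mom_st q) n.

End Defs.

(* Main.v *)
Require Import Defs.
From HB Require Import structures.
From mathcomp Require Import all_boot all_order all_algebra.
From mathcomp Require Import ring lra zify.
Set Implicit Arguments. Unset Strict Implicit. Unset Printing Implicit Defensive.
Import Order.TTheory GRing.Theory Num.Theory.
Local Open Scope ring_scope.

Section Generic.
Variable R : rcfType.
Implicit Types (u : nat -> R).

Definition Bm u n : 'M[R]_n.+1 := \matrix_(i, j) (if (i < n)%N then u (i + j)%N else 0).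
Definition Mv u n (v : 'I_n.+1 -> R) : 'M[R]_n.+1 :=
  \matrix_(i, j) (if (i < n)%N then u (i + j)%N else v j).
Definition cf u n (j : 'I_n.+1) := cofactor (Bm u n) ord_max j.
Arguments Mv : clear implicits.
Arguments cf : clear implicits.

Lemma lift_max_val n (a : 'I_n) : (lift ord_max a : nat) = a.
Proof. by rewrite /= /bump leqNgt ltn_ord. Qed.

Lemma cof_Mv u n v j : cofactor (Mv u n v) ord_max j = cf u n j.
Proof.
rewrite /cf /cofactor; congr (_ * \det _); apply/matrixP => a b.
by rewrite !mxE lift_max_val ltn_ord.
Qed.

Lemma det_Mv u n v : \det (Mv u n v) = \sum_j v j * cf u n j.
Proof.
rewrite (expand_det_row _ ord_max); apply: eq_bigr => j _.
by rewrite cof_Mv mxE ltnn.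
Qed.

Lemma Qpoly_eq u n :
  \det (\matrix_(i < n.+1, j < n.+1)
          (if (i < n)%N then (u (i + j)%N)%:P else 'X^j)) =
  \poly_(j < n.+1) cf u n (inord j).
Proof.
rewrite (expand_det_row _ ord_max).
have Hc : forall j, cofactor (\matrix_(i < n.+1, j < n.+1)
          (if (i < n)%N then (u (i + j)%N)%:P else 'X^j)) ord_max j = (cf u n j)%:P.
  move=> j; rewrite /cf /cofactor rmorphM rmorphXn rmorphN rmorph1 -det_map_mx.
  congr (_ * \det _); apply/matrixP => a b.
  by rewrite !mxE lift_max_val ltn_ord.
apply/polyP => k; rewrite coef_sum coef_poly.
under eq_bigr => j _ do rewrite Hc mxE ltnn coefMC coefXn.
case: (ltnP k n.+1) => hk.
  rewrite (bigD1 (Ordinal hk)) //= eqxx mul1r big1 ?addr0.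
    by congr (cf u n _); apply: val_inj; rewrite /= inordK.
  by move=> j hj; rewrite eq_sym -(inj_eq val_inj) /= in hj; rewrite (negPf hj) mul0r.
rewrite big1 // => j _.
rewrite (_ : (k == j) = false) ?mul0r //; apply/eqP => kj.
by move: (ltn_ord j); rewrite -kj ltnNge hk.
Qed.

Lemma cf_max u n : cf u n ord_max = hankel_det_prev u n.
Proof.
rewrite /cf /cofactor -signr_odd addnn odd_double expr0 mul1r.
case: n => [|m]; first by rewrite det_mx00.
rewrite /=; congr (\det _); apply/matrixP => a b.
by rewrite !mxE !lift_max_val ltn_ord.
Qed.


Lemma uniq0 u m (d : nat -> R) : hankel_det u m != 0 ->
  (forall i, (i <= m)%N -> \sum_(k < m.+1) u (i + k)%N * d k = 0) ->
  forall k, (k <= m)%N -> d k = 0.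
Proof.
move=> hE hort k hk.
pose H : 'M[R]_m.+1 := \matrix_(i, j) u (i + j)%N.
pose v : 'cV[R]_m.+1 := \col_(k < m.+1) d k.
have Hv : H *m v = 0.
  apply/matrixP => i j; rewrite [RHS]mxE -(hort i (leq_ord i)) !mxE.
  by apply: eq_bigr => l _; rewrite !mxE.
have hU : H \in unitmx by rewrite unitmxE unitfE.
have : v = 0 by rewrite -(mulKmx hU v) Hv mulmx0.
move/matrixP/(_ (inord k) 0); rewrite !mxE inordK //.
Qed.

Lemma cf_orth u n i : (i < n)%N -> \sum_(k < n.+1) u (i + k)%N * cf u n k = 0.
Proof.
move=> hi; rewrite -(det_Mv u (fun j : 'I_n.+1 => u (i + j)%N)).
apply: (@determinant_alternate _ _ _ (inord i) ord_max).
  by rewrite -(inj_eq val_inj) /= inordK ?ltn_eqF // ltnW.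
move=> j; rewrite !mxE inordK; last by rewrite ltnW.
by rewrite hi /= ltnn.
Qed.

Lemma key u N (d : nat -> R) : hankel_det_prev u N != 0 -> d N = 0 ->
  (forall i, (i < N)%N -> \sum_(k < N.+1) u (i + k)%N * d k = 0) ->
  forall k, (k < N)%N -> d k = 0.
Proof.
case: N => [|m] //= hE dn hd k hk.
apply: (uniq0 hE) => // i hi.
by have := hd i hi; rewrite big_ord_recr /= dn mulr0 addr0.
Qed.

Lemma orth_char u n (a : nat -> R) : a n != 0 -> hankel_det_prev u n != 0 ->
  (forall i, (i < n)%N -> \sum_(k < n.+1) u (i + k)%N * a k = 0) ->
  (forall k : 'I_n.+1, cf u n k = hankel_det_prev u n * a k / a n) /\
  hankel_det u n = hankel_det_prev u n * (\sum_(k < n.+1) u (n + k)%N * a k) / a n.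
Proof.
move=> han hE hort.
set E := hankel_det_prev u n.
pose d k := cf u n (inord k) - E * a k / a n.
have dn : d n = 0.
  rewrite /d (_ : inord n = ord_max); last by apply: val_inj; rewrite /= inordK.
  by rewrite cf_max -/E mulfK // subrr.
have hd : forall i, (i < n)%N -> \sum_(k < n.+1) u (i + k)%N * d k = 0.
  move=> i hi.
  have -> : \sum_(k < n.+1) u (i + k)%N * d k =
     \sum_(k < n.+1) u (i + k)%N * cf u n k - E / a n * \sum_(k < n.+1) u (i + k)%N * a k.
    rewrite mulr_sumr -sumrB; apply: eq_bigr => k _.
    by rewrite /d inord_val; ring.
  by rewrite cf_orth // hort // mulr0 subr0.
have hcf : forall k : 'I_n.+1, cf u n k = E * a k / a n.
  move=> k; apply/eqP; rewrite -subr_eq0.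
  have -> : cf u n k - E * a k / a n = d k by rewrite /d inord_val.
  apply/eqP.
  case: (ltnP k n) => hk; last first.
    by have -> : (k : nat) = n by apply/eqP; rewrite eqn_leq hk -ltnS ltn_ord.
  exact: (key (N:=n) (d:=d) hE dn hd hk).

split => //.
have -> : hankel_det u n = \det (Mv u n (fun j : 'I_n.+1 => u (n + j)%N)).
  rewrite /hankel_det; congr (\det _); apply/matrixP => i j; rewrite !mxE.
  case: ltnP => // hi.
  by have -> : (i : nat) = n by apply/eqP; rewrite eqn_leq hi -ltnS ltn_ord.
rewrite det_Mv mulr_sumr mulr_suml; apply: eq_bigr => k _.
by rewrite hcf; ring.
Qed.


Lemma onp_eq u n (a : nat -> R) : a n != 0 -> 0 < hankel_det_prev u n ->
  (forall i, (i < n)%N -> \sum_(k < n.+1) u (i + k)%N * a k = 0) ->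
  0 < (\sum_(k < n.+1) u (n + k)%N * a k) / a n ->
  orthonormal_poly u n =
    (a n * Num.sqrt ((\sum_(k < n.+1) u (n + k)%N * a k) / a n))^-1 *: \poly_(k < n.+1) a k
  /\ hankel_det u n = hankel_det_prev u n * ((\sum_(k < n.+1) u (n + k)%N * a k) / a n).
Proof.
move=> han hE hort hH.
have [hcf hdet] := orth_char han (lt0r_neq0 hE) hort.
set E := hankel_det_prev u n in hE hcf hdet *.
set H := (\sum_(k < n.+1) u (n + k)%N * a k) / a n in hH *.
have hdet' : hankel_det u n = E * H by rewrite hdet /H mulrA.
split => //.
rewrite /orthonormal_poly Qpoly_eq -/E hdet' mulrA -expr2 sqrtrM ?sqr_ge0 //.
rewrite sqrtr_sqr ger0_norm ?ltW //.
have -> : \poly_(j < n.+1) cf u n (inord j) = (E / a n) *: \poly_(k < n.+1) a k.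
  apply/polyP => j; rewrite coefZ !coef_poly; case: ltnP => hj; last by rewrite mulr0.
  by rewrite hcf inordK // mulrAC.
rewrite scalerA; congr (_ *: _).
have hs : Num.sqrt H != 0 by rewrite sqrtr_eq0 -ltNge.
by field; rewrite han hs lt0r_neq0.
Qed.

End Generic.
Ltac side := repeat match goal with |- is_true (_ && _) => apply/andP; split end; try assumption.

Section Q.
Variable R : rcfType.
Variable q : R.
Hypothesis hq0 : 0 < q.
Hypothesis hq1 : q < 1.

Definition qp n := qpoch q q n.
Definition wz n k : R := if (k <= n)%N then (-1) ^+ k * qbinom q n k * q ^+ 'C(k, 2) else 0.
Definition F n (z : R) := \prod_(j < n) (1 - z * q ^+ j).

Lemma qn0 : q != 0. Proof. by rewrite lt0r_neq0. Qed.

Lemma qpS n : qp n.+1 = qp n * (1 - q ^+ n.+1).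
Proof. by rewrite /qp /qpoch big_ord_recr /= exprS. Qed.

Lemma qp0 : qp 0 = 1. Proof. by rewrite /qp /qpoch big_ord0. Qed.

Lemma qX_lt1 n : q ^+ n.+1 < 1.
Proof.
rewrite exprS; apply: (@le_lt_trans _ _ (q * 1)).
  by rewrite ler_pM2l // exprn_ile1 // ltW.
by rewrite mulr1.
Qed.

Lemma qp_gt0 n : 0 < qp n.
Proof.
rewrite /qp /qpoch; apply: prodr_gt0 => i _.
by rewrite subr_gt0 -exprS qX_lt1.
Qed.

Lemma qp_neq0 n : qp n != 0. Proof. by rewrite lt0r_neq0 // qp_gt0. Qed.

Lemma oneB_neq0 n : 1 - q ^+ n.+1 != 0.
Proof. by rewrite subr_eq0 eq_sym lt_eqF // qX_lt1. Qed.

Lemma qbinomE n k : (k <= n)%N -> qbinom q n k = qp n / (qp k * qp (n - k)).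
Proof. by []. Qed.

Lemma qbinom_nn n : qbinom q n n = 1.
Proof. by rewrite /qbinom subnn -/(qp n) -/(qp 0) qp0 mulr1 divff // qp_neq0. Qed.

Lemma qbinom_n0 n : qbinom q n 0 = 1.
Proof. by rewrite /qbinom subn0 -/(qp n) -/(qp 0) qp0 mul1r divff // qp_neq0. Qed.

Lemma wz_rec n k : wz n.+1 k.+1 = q ^+ k.+1 * wz n k.+1 - q ^+ k * wz n k.
Proof.
rewrite /wz ltnS; case: (ltngtP k n) => hk.
- idtac.
  have [d ->] : exists d, n = (k + d.+1)%N by exists (n - k.+1)%N; lia.
  rewrite /qbinom -!/(qp _).
  have -> : (k + d.+1 - k.+1 = d)%N by lia.
  have hx : q ^+ (k + d.+1).+1 = q ^+ k.+1 * q ^+ d.+1 by rewrite -exprD; congr (_ ^+ _); lia.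
  have -> : ((k + d.+1).+1 - k.+1 = d.+1)%N by lia.
  move: hx; set N := (k + d.+1)%N => hx.
  rewrite (qpS N) (qpS k) (qpS d) hx binS bin1 exprD !exprS.
  have h1 := qp_neq0 k; have h2 := qp_neq0 d.
  have h4 := oneB_neq0 k; have h5 := oneB_neq0 d.
  rewrite !exprS in h4 h5.
  by field; rewrite h1 h2 h4 h5.
- by rewrite !mulr0 subr0.
- rewrite hk !qbinom_nn binS bin1 exprD !exprS; ring.
Qed.

Lemma wz0 n : wz n 0 = 1.
Proof. by rewrite /wz leq0n qbinom_n0 bin0n expr0 !mulr1. Qed.

Lemma wz_big n k : (n < k)%N -> wz n k = 0.
Proof. by rewrite /wz ltnNge => /negPf ->. Qed.

Lemma qbin n z : \sum_(k < n.+1) wz n k * z ^+ k = F n z.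
Proof.
elim: n z => [|n IH] z.
  by rewrite big_ord_recl big_ord0 wz0 /F big_ord0 addr0 mul1r expr0.
have -> : F n.+1 z = (1 - z) * F n (z * q).
  rewrite /F big_ord_recl /= expr0 mulr1; congr (_ * _).
  by apply: eq_bigr => j _; rewrite /bump /= exprS mulrA.
rewrite -IH big_ord_recl wz0 expr0 mul1r.
under eq_bigr => k _ do rewrite /= /bump /= wz_rec mulrBl.
rewrite sumrB.
have -> : \sum_(i < n.+1) q ^+ i.+1 * wz n i.+1 * z ^+ i.+1 =
          \sum_(k < n.+1) wz n k * (z * q) ^+ k - 1.
  rewrite big_ord_recr /= wz_big // mulr0 mul0r addr0.
  rewrite [in RHS]big_ord_recl wz0 expr0 mul1r addrAC subrr add0r.
  by apply: eq_bigr => k _; rewrite /= /bump /= exprMn; ring.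
have E : forall a b : R, 1 + (a - 1 - b) = a - b by move=> a b; ring.
rewrite mulrBl mul1r mulr_sumr E; congr (_ - _).
by apply: eq_bigr => k _; rewrite exprMn exprS; ring.
Qed.


Lemma pow_key k m i : (m <= i)%N ->
  (q ^+ k) ^+ m * (q^-1) ^+ (k * i) = ((q^-1) ^+ (i - m)) ^+ k.
Proof.
move=> hm; have [d ->] : exists d, i = (m + d)%N by exists (i - m)%N; lia.
rewrite (_ : (m + d - m = d)%N); last lia.
rewrite mulnDr exprD mulrA -!exprM exprVn mulfV ?expf_neq0 ?qn0 // mul1r.
by rewrite mulnC.
Qed.

Lemma sumpoly n i (r : {poly R}) : (size r <= i.+1)%N ->
  \sum_(k < n.+1) wz n k * (r.[q ^+ k] * (q^-1) ^+ (k * i)) =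
  \sum_(m < i.+1) r`_m * F n ((q^-1) ^+ (i - m)).
Proof.
move=> hr.
under eq_bigr => k _ do rewrite (horner_coef_wide _ hr) mulr_suml mulr_sumr.
rewrite exchange_big /=; apply: eq_bigr => m _.
rewrite -qbin mulr_sumr; apply: eq_bigr => k _.
rewrite -(pow_key k (ltnSE (ltn_ord m))); ring.
Qed.

Lemma Fzero n d : (d < n)%N -> F n ((q^-1) ^+ d) = 0.
Proof.
move=> hd; apply/eqP/prodf_eq0; exists (Ordinal hd) => //=.
by rewrite exprVn mulVf ?subrr // expf_neq0 // qn0.
Qed.

Lemma Gval n : F n ((q^-1) ^+ n) = (-1) ^+ n * (q^-1) ^+ 'C(n.+1, 2) * qp n.
Proof.
elim: n => [|n IH]; first by rewrite /F big_ord0 qp0 expr0 bin_small // expr0 !mulr1.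
rewrite /F big_ord_recl expr0 mulr1.
have -> : \prod_(i < n) (1 - (q^-1) ^+ n.+1 * q ^+ (bump 0 i)) = F n ((q^-1) ^+ n).
  apply: eq_bigr => j _; rewrite /bump /= (exprSr (q^-1) n) (exprS q j).
  by congr (_ - _); field; rewrite qn0.
rewrite IH qpS (binS n.+1 1) bin1 exprD (exprSr (q^-1) n) exprS (exprS q n).
have hq := qn0; have h := expf_neq0 n hq; have h2 := expf_neq0 'C(n.+1, 2) hq.
rewrite !exprVn.
by field; rewrite hq h h2.
Qed.


Lemma sum_lt n i (r : {poly R}) : (i < n)%N -> (size r <= i.+1)%N ->
  \sum_(k < n.+1) wz n k * (r.[q ^+ k] * (q^-1) ^+ (k * i)) = 0.
Proof.
move=> hi hr; rewrite sumpoly // big1 // => m _.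
by rewrite Fzero ?mulr0 //; apply: leq_ltn_trans hi; apply: leq_subr.
Qed.

Lemma sum_eq n (r : {poly R}) : (size r <= n.+1)%N ->
  \sum_(k < n.+1) wz n k * (r.[q ^+ k] * (q^-1) ^+ (k * n)) = r`_0 * F n ((q^-1) ^+ n).
Proof.
move=> hr; rewrite sumpoly // big_ord_recl subn0 big1 ?addr0 // => m _.
rewrite Fzero ?mulr0 //= /bump /=; have := ltn_ord m; lia.
Qed.

Definition lin (a b : R) : {poly R} := a%:P + b%:P * 'X.

Lemma lin_horner a b x : (lin a b).[x] = a + b * x.
Proof. by rewrite /lin hornerD hornerC hornerMX hornerC. Qed.

Lemma size_lin a b : (size (lin a b) <= 2)%N.
Proof.
rewrite /lin; apply: leq_trans (size_polyD _ _) _.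
rewrite geq_max; apply/andP; split; first by apply: leq_trans (size_polyC_leq1 _) _.
apply: leq_trans (size_polyMleq _ _) _; rewrite size_polyX.
by rewrite size_polyC; case: (b != 0).
Qed.

Lemma size_prodlin i (a b : nat -> R) :
  (size (\prod_(j < i) lin (a j) (b j))%R <= i.+1)%N.
Proof.
elim: i => [|i IH]; first by rewrite big_ord0 size_polyC; case: (1 != 0).
rewrite big_ord_recr /=; apply: leq_trans (size_polyMleq _ _) _.
have := size_lin (a i) (b i); move: IH.
set X := size _; set Y := size _; move=> hx hy; rewrite -subn1; lia.
Qed.

Lemma qp_add k i : qp (k + i) = qp k * \prod_(j < i) (1 - q ^+ (k + j).+1).
Proof.
elim: i => [|i IH]; first by rewrite addn0 big_ord0 mulr1.
by rewrite addnS qpS IH big_ord_recr /= mulrA.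
Qed.

Lemma C2 n : ('C(n.+1, 2) * 2 = n.+1 * n)%N.
Proof. elim: n => [|n IH] //; rewrite binS bin1 mulnDl IH; lia. Qed.


Local Notation t := (Num.sqrt q).

Lemma t_gt0 : 0 < t. Proof. by rewrite sqrtr_gt0. Qed.
Lemma tn0 : t != 0. Proof. by rewrite lt0r_neq0 // t_gt0. Qed.
Lemma tq : t ^+ 2 = q. Proof. by rewrite sqr_sqrtr // ltW. Qed.
Lemma qpow m : q ^+ m = t ^+ (2 * m). Proof. by rewrite exprM tq. Qed.
Lemma tpow_eq a b : a = b -> t ^+ a = t ^+ b. Proof. by move=> ->. Qed.

Definition al n k := wz n k * t ^+ (k ^ 2 + 2 * k) / qp k.
Definition rs i : {poly R} := \prod_(j < i) lin 1 (- q ^+ j.+1).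

Lemma term_s n i k : mom_s q (i + k) * al n k =
  (t ^+ ((i.+1) ^ 2))^-1 * (wz n k * ((rs i).[q ^+ k] * (q^-1) ^+ (k * i))).
Proof.
rewrite /mom_s /al /rs -/(qp _) addnC qp_add horner_prod.
have -> : \prod_(j < i) (lin 1 (- q ^+ j.+1)).[q ^+ k] = \prod_(j < i) (1 - q ^+ (k + j).+1).
  by apply: eq_bigr => j _; rewrite lin_horner mulNr -exprD addSn addnC.
have E : t ^+ ((k + i).+1 ^ 2) = t ^+ (k ^ 2 + 2 * k) * t ^+ ((i.+1) ^ 2) * q ^+ (k * i).
  by rewrite qpow -!exprD; apply: tpow_eq; lia.
rewrite E exprVn.
have h1 := qp_neq0 k; have h2 := expf_neq0 (k ^ 2 + 2 * k) tn0.
have h3 := expf_neq0 (i.+1 ^ 2) tn0; have h4 := expf_neq0 (k * i) qn0.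
by field; rewrite h1 h2 h3 h4.
Qed.

Lemma size_rs i : (size (rs i) <= i.+1)%N.
Proof. exact: (size_prodlin i (fun _ => 1) (fun j => - q ^+ j.+1)). Qed.

Lemma rs0 i : (rs i)`_0 = 1.
Proof.
rewrite -horner_coef0 /rs horner_prod big1 // => j _.
by rewrite lin_horner mulr0 addr0.
Qed.


Definition be n k := (1 - q ^+ k.+1) - (1 - q ^+ k) * (1 - q ^+ n.+1).
Definition alt n k := wz n k * t ^+ (k ^ 2 + 2 * k) / qp k.+1 * be n k.
Definition rt n i : {poly R} :=
  (\prod_(j < i) lin 1 (- q ^+ j.+2)) * lin (q ^+ n.+1) (1 - q ^+ n.+1 - q).

Lemma term_st n i k : mom_st q (i.+1 + k) * alt n k =
  (t ^+ ((i.+2) ^ 2))^-1 * (wz n k * ((rt n i).[q ^+ k] * (q^-1) ^+ (k * i.+1))).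
Proof.
rewrite addSn /= /mom_s /alt /rt -/(qp _).
have -> : ((i + k).+1 = k.+1 + i)%N by lia.
rewrite qp_add hornerM horner_prod lin_horner.
have -> : \prod_(j < i) (lin 1 (- q ^+ j.+2)).[q ^+ k] = \prod_(j < i) (1 - q ^+ (k.+1 + j).+1).
  by apply: eq_bigr => j _; rewrite lin_horner mulNr -exprD; congr (_ - q ^+ _); lia.
have -> : be n k = q ^+ n.+1 + (1 - q ^+ n.+1 - q) * q ^+ k by rewrite /be exprS; ring.
have E : t ^+ ((k.+1 + i).+1 ^ 2) = t ^+ (k ^ 2 + 2 * k) * t ^+ ((i.+2) ^ 2) * q ^+ (k * i.+1).
  by rewrite qpow -!exprD; apply: tpow_eq; lia.
rewrite E exprVn.
have h1 := qp_neq0 k.+1; have h2 := expf_neq0 (k ^ 2 + 2 * k) tn0.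
have h3 := expf_neq0 (i.+2 ^ 2) tn0; have h4 := expf_neq0 (k * i.+1) qn0.
by field; rewrite h1 h2 h3 h4.
Qed.

Lemma size_rt n i : (size (rt n i) <= i.+2)%N.
Proof.
rewrite /rt; apply: leq_trans (size_polyMleq _ _) _.
have := size_prodlin i (fun _ => 1) (fun j => - q ^+ j.+2).
have := size_lin (q ^+ n.+1) (1 - q ^+ n.+1 - q).
set X := size _; set Y := size _; move=> hx hy; rewrite -subn1; lia.
Qed.

Lemma rt0 n i : (rt n i)`_0 = q ^+ n.+1.
Proof.
rewrite -horner_coef0 /rt hornerM horner_prod lin_horner big1 ?mulr0 ?addr0 ?mul1r // => j _.
by rewrite lin_horner mulr0 addr0.
Qed.


Lemma wz_be n k : (k <= n)%N ->
  wz n k * be n k / (1 - q ^+ k.+1) = wz n k - wz n.+1 k.+1 * (1 - (q^-1) ^+ k).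
Proof.
move=> hk; rewrite /wz ltnS hk !qbinomE ?ltnS // subSS -!/(qp _) !qpS binS bin1 exprD /be.
rewrite exprVn !exprS.
have h1 := qp_neq0 k; have h2 := qp_neq0 n; have h3 := qp_neq0 (n - k).
have h4 := oneB_neq0 k; rewrite exprS in h4.
have h5 := expf_neq0 k qn0.
by field; side.
Qed.

Lemma sumA n : (0 < n)%N ->
  \sum_(k < n.+1) wz n k * be n k / (1 - q ^+ k.+1) = 1 - q.
Proof.
move=> hn.
rewrite (eq_bigr (fun k : 'I_n.+1 => wz n k - wz n.+1 k.+1 * (1 - (q^-1) ^+ k))); last first.
  by move=> k _; rewrite wz_be // -ltnS.
rewrite sumrB.
have -> : \sum_(k < n.+1) wz n k = 0.
  rewrite (eq_bigr (fun k : 'I_n.+1 => wz n k * 1 ^+ k)); last by move=> k _; rewrite expr1n mulr1.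
  by rewrite qbin -(expr0 (q^-1)) Fzero.
have HB : \sum_(m < n.+2) wz n.+1 m * (1 - q * (q^-1) ^+ m) = 0.
  rewrite (eq_bigr (fun m : 'I_n.+2 => wz n.+1 m * 1 ^+ m - q * (wz n.+1 m * (q^-1) ^+ m))); last first.
    by move=> m _; rewrite expr1n; ring.
  rewrite sumrB -mulr_sumr !qbin -{1}(expr0 (q^-1)) -{2}(expr1 (q^-1)) !Fzero //.
  by rewrite mulr0 subr0.
move: HB; rewrite big_ord_recl wz0 expr0 mulr1 mul1r.
under eq_bigr => k _ do rewrite /= /bump /= exprS mulrA mulfV ?qn0 // mul1r.
move/eqP; rewrite addrC addr_eq0 => /eqP ->.
ring.
Qed.

Lemma st_orth0 n : (0 < n)%N -> \sum_(k < n.+1) mom_st q (0 + k) * alt n k = 0.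
Proof.
move=> hn; rewrite big_ord_recl.
have -> : mom_st q (0 + 0) * alt n 0 = t.
  rewrite /= /alt wz0 /be -/(qp 1) qpS qp0.
  have h := oneB_neq0 0.
  have := tq; have := tn0; move: (Num.sqrt q) => T hT hTq.
  rewrite -hTq in h *.
  by field; side.
have E : forall k : 'I_n, mom_st q (0 + bump 0 k) * alt n (bump 0 k) =
    t^-1 * (wz n k.+1 * be n k.+1 / (1 - q ^+ k.+2)).
  move=> k; rewrite /bump /= /mom_s /alt -/(qp _) qpS.
  have E : t ^+ (k.+2 ^ 2) = t * t ^+ (k.+1 ^ 2 + 2 * k.+1).
    by rewrite -exprS; apply: tpow_eq; lia.
  rewrite E.
  have h1 := qp_neq0 k.+1; have h2 := expf_neq0 (k.+1 ^ 2 + 2 * k.+1) tn0.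
  have h4 := oneB_neq0 k.+1.
  by field; rewrite h1 h2 h4 tn0.
rewrite (eq_bigr _ (fun k _ => E k)) -mulr_sumr.
have HA : \sum_(k < n) wz n k.+1 * be n k.+1 / (1 - q ^+ k.+2) = - q.
  apply: (@addrI _ 1); rewrite -(sumA hn) big_ord_recl; congr (_ + _).
    rewrite wz0 /be expr0 subrr mul0r subr0 mul1r divff //.
    by have := oneB_neq0 0; rewrite expr1.
rewrite HA.
have := tq; have := tn0; move: (Num.sqrt q) => T hT hTq.
rewrite -hTq.
by field.
Qed.

Lemma orth_s n i : (i < n)%N -> \sum_(k < n.+1) mom_s q (i + k) * al n k = 0.
Proof.
move=> hi; rewrite (eq_bigr _ (fun (k : 'I_n.+1) _ => term_s n i k)) -mulr_sumr.
by rewrite sum_lt ?size_rs // mulr0.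
Qed.

Lemma h_s n : \sum_(k < n.+1) mom_s q (n + k) * al n k =
  (t ^+ ((n.+1) ^ 2))^-1 * F n ((q^-1) ^+ n).
Proof.
rewrite (eq_bigr _ (fun (k : 'I_n.+1) _ => term_s n n k)) -mulr_sumr.
by rewrite sum_eq ?size_rs // rs0 mul1r.
Qed.

Lemma orth_st n i : (i < n)%N -> \sum_(k < n.+1) mom_st q (i + k) * alt n k = 0.
Proof.
case: i => [|i] hi; first exact: st_orth0.
rewrite (eq_bigr _ (fun (k : 'I_n.+1) _ => term_st n i k)) -mulr_sumr.
by rewrite sum_lt ?size_rt // mulr0.
Qed.

Lemma h_st n : (0 < n)%N -> \sum_(k < n.+1) mom_st q (n + k) * alt n k =
  (t ^+ ((n.+1) ^ 2))^-1 * (q ^+ n.+1 * F n ((q^-1) ^+ n)).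
Proof.
case: n => [|n] // _.
rewrite (eq_bigr _ (fun (k : 'I_n.+2) _ => term_st n.+1 n k)) -mulr_sumr.
by rewrite sum_eq ?size_rt // rt0.
Qed.

Lemma wznn n : wz n n = (-1) ^+ n * q ^+ 'C(n, 2).
Proof. by rewrite /wz leqnn qbinom_nn mulr1. Qed.

Lemma alt_nn n : alt n n = al n n * q ^+ n.
Proof.
rewrite /alt /al qpS /be.
have h1 := qp_neq0 n; have h4 := oneB_neq0 n; rewrite exprS in h4 *.
by field; side.
Qed.

Definition Hs n := qp n ^+ 2 / t ^+ (4 * n ^ 2 + 4 * n + 1).

Lemma sgn_neq0 n : (-1) ^+ n != 0 :> R.
Proof. by rewrite signr_eq0. Qed.

Lemma hs_val n : (\sum_(k < n.+1) mom_s q (n + k) * al n k) / al n n = Hs n.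
Proof.
rewrite h_s Gval /al wznn /Hs.
have E : t ^+ (4 * n ^ 2 + 4 * n + 1) =
   t ^+ ((n.+1) ^ 2) * q ^+ 'C(n.+1, 2) * q ^+ 'C(n, 2) * t ^+ (n ^ 2 + 2 * n).
  rewrite !qpow -!exprD; apply: tpow_eq.
  have := C2 n; have := binS n 1; rewrite bin1; nia.
rewrite E !exprVn.
have h1 := qp_neq0 n; have h2 := sgn_neq0 n.
have h3 := expf_neq0 ((n.+1) ^ 2) tn0; have h4 := expf_neq0 (n ^ 2 + 2 * n) tn0.
have h5 := expf_neq0 'C(n.+1, 2) qn0; have h6 := expf_neq0 'C(n, 2) qn0.
by field; side.
Qed.

Lemma hst_val n : (\sum_(k < n.+1) mom_st q (n + k) * alt n k) / alt n n = q * Hs n.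
Proof.
case: (posnP n) => [->|hn].
  rewrite big_ord1 /= mulfK; last first.
    rewrite /alt wz0 /be -/(qp 1) qpS qp0.
    have h := oneB_neq0 0.
    have := tq; have := tn0; move: (Num.sqrt q) => T hT hTq.
    rewrite -hTq in h *.
    rewrite (_ : _ * _ = 1); first exact: oner_neq0.
    by rewrite expr0 expr1 subrr mul0r subr0; field; rewrite expr1 in h.
  rewrite /Hs /= qp0 expr1n mul1r expr1.
  have := tq; have := tn0; move: (Num.sqrt q) => T hT hTq.
  rewrite -hTq; by field.
rewrite h_st // alt_nn -hs_val h_s.
have h1 : al n n != 0.
  rewrite /al wznn; have h1 := qp_neq0 n; have h2 := sgn_neq0 n.
  have h4 := expf_neq0 (n ^ 2 + 2 * n) tn0; have h5 := expf_neq0 'C(n, 2) qn0.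
  by rewrite !mulf_neq0 ?invr_neq0.
have h2 := expf_neq0 n qn0; have h3 := expf_neq0 (n.+1 ^ 2) tn0; rewrite exprS.
by field; side.
Qed.


Lemma Hs_gt0 n : 0 < Hs n.
Proof. by rewrite /Hs divr_gt0 // ?exprn_gt0 ?qp_gt0 ?t_gt0. Qed.

Lemma al_nn_neq0 n : al n n != 0.
Proof.
rewrite /al wznn; have h1 := qp_neq0 n; have h2 := sgn_neq0 n.
have h4 := expf_neq0 (n ^ 2 + 2 * n) tn0; have h5 := expf_neq0 'C(n, 2) qn0.
by rewrite !mulf_neq0 ?invr_neq0.
Qed.

Lemma alt_nn_neq0 n : alt n n != 0.
Proof. by rewrite alt_nn mulf_neq0 ?al_nn_neq0 ?expf_neq0 ?qn0. Qed.

Lemma hs_pos n : 0 < (\sum_(k < n.+1) mom_s q (n + k) * al n k) / al n n.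
Proof. by rewrite hs_val Hs_gt0. Qed.

Lemma hst_pos n : 0 < (\sum_(k < n.+1) mom_st q (n + k) * alt n k) / alt n n.
Proof. by rewrite hst_val mulr_gt0 ?Hs_gt0. Qed.

Lemma dets n : 0 < hankel_det_prev (mom_st q) n /\ 0 < hankel_det_prev (mom_s q) n /\
  hankel_det_prev (mom_st q) n = q ^+ n * hankel_det_prev (mom_s q) n.
Proof.
elim: n => [|n [h1 [h2 h3]]]; first by rewrite /= expr0 mul1r ltr01.
have [_ Es] := onp_eq (al_nn_neq0 n) h2 (@orth_s n) (hs_pos n).
have [_ Est] := onp_eq (alt_nn_neq0 n) h1 (@orth_st n) (hst_pos n).
rewrite /= Es Est hs_val hst_val h3.
split; first by rewrite -h3; apply: mulr_gt0 => //; apply: mulr_gt0 => //; exact: Hs_gt0.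
split; first by apply: mulr_gt0 => //; exact: Hs_gt0.
by rewrite exprS; ring.
Qed.

Lemma onpU n : orthonormal_poly (mom_st q) n =
  (alt n n * Num.sqrt (q * Hs n))^-1 *: \poly_(k < n.+1) alt n k.
Proof.
have [h1 _] := dets n.
have [-> _] := onp_eq (alt_nn_neq0 n) h1 (@orth_st n) (hst_pos n).
by rewrite hst_val.
Qed.

Lemma sqrtH n : Num.sqrt (q * Hs n) = qp n * Num.sqrt t / t ^+ (2 * n ^ 2 + 2 * n).
Proof.
have E : t ^+ (4 * n ^ 2 + 4 * n + 1) = (t ^+ (2 * n ^ 2 + 2 * n)) ^+ 2 * t.
  by rewrite -exprM -exprSr; apply: tpow_eq; lia.
have hpos : 0 <= qp n * Num.sqrt t / t ^+ (2 * n ^ 2 + 2 * n).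
  by rewrite ?(mulr_ge0, invr_ge0, sqrtr_ge0, exprn_ge0, ltW (qp_gt0 n), ltW t_gt0).
rewrite -[RHS](ger0_norm hpos) -sqrtr_sqr; congr Num.sqrt.
rewrite /Hs E.
have ht : Num.sqrt t ^+ 2 = t by rewrite sqr_sqrtr // ltW // t_gt0.
have h1 := expf_neq0 (2 * n ^ 2 + 2 * n) tn0.
move: (t ^+ (2 * n ^ 2 + 2 * n)) h1 => X hX.
rewrite expr_div_n exprMn ht.
have := tq; have := tn0; move: (Num.sqrt (Num.sqrt q)) (Num.sqrt q) => r T hT hTq.
rewrite -hTq; by field; side.
Qed.

Lemma C2' n : ('C(n, 2) * 2 + n = n * n)%N.
Proof. case: n => [|n] //; rewrite C2; lia. Qed.

Lemma inv_Ct n : (alt n n * Num.sqrt (q * Hs n))^-1 = Ct q n.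
Proof.
have -> : alt n n * Num.sqrt (q * Hs n) = (-1) ^+ n * (t ^+ n * Num.sqrt t).
  rewrite alt_nn sqrtH /al wznn.
  have E : t ^+ (2 * n ^ 2 + 2 * n) * t ^+ n = t ^+ (n ^ 2 + 2 * n) * q ^+ 'C(n, 2) * q ^+ n.
    rewrite !qpow -!exprD; apply: tpow_eq; have := C2' n; nia.
  have hn := expf_neq0 n tn0.
  have E' : t ^+ (2 * n ^ 2 + 2 * n) = t ^+ (n ^ 2 + 2 * n) * q ^+ 'C(n, 2) * q ^+ n / t ^+ n.
    by rewrite -E mulfK.
  rewrite E'.
  have h1 := qp_neq0 n; have h2 := expf_neq0 (n ^ 2 + 2 * n) tn0.
  have h3 := expf_neq0 'C(n, 2) qn0; have h4 := expf_neq0 n qn0.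
  by field; side.
by rewrite invfM -exprVn invrN1 /Ct.
Qed.

Lemma coefU n k : (k <= n)%N -> (orthonormal_poly (mom_st q) n)`_k = Ct q n * alt n k.
Proof. by move=> hk; rewrite onpU coefZ coef_poly ltnS hk inv_Ct. Qed.

Definition pm n : {poly R} := \poly_(k < n.+1) (alt n k / alt n n).

Lemma monicU n : monic_pt q n = pm n.
Proof.
rewrite /monic_pt onpU coefZ coef_poly ltnSn scalerA.
have h1 := alt_nn_neq0 n.
have h2 : Num.sqrt (q * Hs n) != 0.
  by rewrite lt0r_neq0 // sqrtr_gt0 mulr_gt0 ?Hs_gt0.
apply/polyP => k; rewrite coefZ !coef_poly; case: ifP => _; last by rewrite mulr0.
by field; side.
Qed.

Lemma sum_widen (f : nat -> R) M N : (M <= N)%N -> (forall k, (M <= k)%N -> f k = 0) ->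
  \sum_(k < N) f k = \sum_(k < M) f k.
Proof.
move=> hMN hf; rewrite -(subnKC hMN); move: (N - M)%N => d.
elim: d => [|d IH]; first by rewrite addn0.
by rewrite addnS big_ord_recr /= IH hf ?addr0 // leq_addr.
Qed.

Lemma Lsum n N i : (n.+1 <= N)%N ->
  \sum_(k < N) mom_st q (i + k) * (pm n)`_k =
  (\sum_(k < n.+1) mom_st q (i + k) * alt n k) / alt n n.
Proof.
move=> hN; rewrite (sum_widen (f := fun k => mom_st q (i + k) * (pm n)`_k) hN); last first.
  by move=> k hk; rewrite coef_poly ltnNge hk mulr0.
rewrite mulr_suml; apply: eq_bigr => k _; rewrite coef_poly ltn_ord; ring.
Qed.

Definition Ee j := - (1 - q ^+ j.+1) * be j.+1 j / ((1 - q) * q ^+ (3 * j + 2) * t).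

Lemma e_val j : alt j.+1 j / alt j.+1 j.+1 = Ee j.
Proof.
rewrite alt_nn /alt /al /Ee !wznn /wz ltnW // qbinomE // -!/(qp _).
rewrite (_ : (j.+1 - j = 1)%N); last lia.
rewrite (qpS 0) qp0 mul1r binS bin1.
have E : t ^+ ((j.+1) ^ 2 + 2 * j.+1) * q ^+ ('C(j, 2) + j) * q ^+ j.+1 =
         t ^+ (j ^ 2 + 2 * j) * q ^+ 'C(j, 2) * q ^+ (3 * j + 2) * t.
  rewrite !qpow -!exprD -exprSr; apply: tpow_eq; lia.
have h0 := oneB_neq0 0; rewrite expr1 in h0.
have h1 := qp_neq0 j; have h2 := oneB_neq0 j; have h3 := sgn_neq0 j.
have h4 := expf_neq0 (j ^ 2 + 2 * j) tn0; have h5 := expf_neq0 'C(j, 2) qn0.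
have h6 := expf_neq0 (3 * j + 2) qn0; have h7 := tn0.
have E' : t ^+ ((j.+1) ^ 2 + 2 * j.+1) =
   t ^+ (j ^ 2 + 2 * j) * q ^+ 'C(j, 2) * q ^+ (3 * j + 2) * t / (q ^+ ('C(j, 2) + j) * q ^+ j.+1).
  have h8 := expf_neq0 ('C(j, 2) + j) qn0; have h9 := expf_neq0 j.+1 qn0.
  by rewrite -E; field; side.
rewrite E' (exprS (-1) j) expr1 (qpS j).
have h8 := expf_neq0 ('C(j, 2) + j) qn0; have h9 := expf_neq0 j.+1 qn0.
have h10 := qp_neq0 j.+1.
by field; side.
Qed.

Lemma qe a b c m : (a = b * m + c)%N -> q ^+ a = (q ^+ m) ^+ b * q ^+ c.
Proof. by move=> ->; rewrite exprD -exprM mulnC. Qed.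

Lemma ct1 : ct q 1 = - Ee 0.
Proof.
rewrite /ct /Ee /be.
have h0 := oneB_neq0 0; rewrite expr1 in h0.
have h1 := qn0; have h2 := tn0.
by field; side.
Qed.

Lemma ctS m : ct q m.+2 = Ee m - Ee m.+1.
Proof.
rewrite /ct /Ee /be.
rewrite (@qe (2 * m.+2) 2 4 m) ?(@qe (3 * m + 2) 3 2 m) ?(@qe (3 * m.+1 + 2) 3 5 m); try lia.
rewrite !exprS ?expr0.
have h0 := oneB_neq0 0; rewrite expr1 in h0.
have h1 := qn0; have h2 := tn0; have h3 := expf_neq0 m qn0.
by field; side.
Qed.

Lemma lt_val m : lt_coef q m.+2 = Hs m.+1 / Hs m.
Proof.
rewrite /lt_coef /Hs /= qpS.
have E : t ^+ (4 * m.+1 ^ 2 + 4 * m.+1 + 1) = t ^+ (4 * m ^ 2 + 4 * m + 1) * q ^+ (4 * m.+1).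
  by rewrite qpow -exprD; apply: tpow_eq; lia.
rewrite E.
have h1 := qp_neq0 m; have h2 := expf_neq0 (4 * m ^ 2 + 4 * m + 1) tn0.
have h3 := expf_neq0 (4 * m.+1) qn0.
by field; side.
Qed.

Lemma pm0 : pm 0 = 1.
Proof.
apply/polyP => k; rewrite coef_poly coefC; case: k => [|k] //=.
by rewrite divff // alt_nn_neq0.
Qed.

Lemma pm_top n : (pm n)`_n = 1.
Proof. by rewrite coef_poly ltnSn divff // alt_nn_neq0. Qed.

Lemma pm_big n k : (n < k)%N -> (pm n)`_k = 0.
Proof. by move=> h; rewrite coef_poly ltnNge h. Qed.

Lemma pm_sub n : (pm n.+1)`_n = Ee n.
Proof. by rewrite coef_poly ltnW // e_val. Qed.

Lemma orthL n N i : (n.+1 <= N)%N -> (i < n)%N ->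
  \sum_(k < N) mom_st q (i + k) * (pm n)`_k = 0.
Proof. by move=> hN hi; rewrite Lsum // orth_st // mul0r. Qed.

Lemma hL n N : (n.+1 <= N)%N ->
  \sum_(k < N) mom_st q (n + k) * (pm n)`_k = q * Hs n.
Proof. by move=> hN; rewrite Lsum // hst_val. Qed.

Lemma recU n : (1 <= n)%N ->
  monic_pt q n = ('X - (ct q n)%:P) * monic_pt q n.-1
      - (lt_coef q n)%:P * (if n is 1 then 0 else monic_pt q n.-2).
Proof.
case: n => [|[|m]] // _; rewrite !monicU /=.
  rewrite pm0 mulr0 subr0 mulr1; apply/polyP => k.
  rewrite coefB coefX coefC; case: k => [|[|k]] /=.
  - by rewrite coef_poly /= (e_val 0) ct1 sub0r opprK.
  - by rewrite (pm_top 1) subr0.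
  - by rewrite (@pm_big 1) // subr0.
set c := ct q m.+2; set l := lt_coef q m.+2.
set A := pm m.+2; set B := pm m.+1; set C := pm m.
apply/eqP; rewrite -subr_eq0; apply/eqP.
set D := A - _.
have hD : forall k, D`_k = A`_k - (if k == 0%N then 0 else B`_k.-1) + c * B`_k + l * C`_k.
  move=> k; rewrite /D !coefB mulrBl coefB coefXM !coefCM.
  by case: (k == 0%N); ring.
have hhi : forall k, (m.+1 <= k)%N -> D`_k = 0.
  move=> k hk; rewrite hD /A /B /C.
  have [->|hk1] := eqVneq k m.+1.
    rewrite /= (pm_sub m.+1) (pm_sub m) (pm_top m.+1) (@pm_big m m.+1) // mulr0 addr0.
    by rewrite /c ctS; ring.
  have [->|hk2] := eqVneq k m.+2.
    rewrite /= (pm_top m.+2) (pm_top m.+1) (@pm_big m.+1 m.+2) // (@pm_big m m.+2) //.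
    by rewrite !mulr0 !addr0 subrr.
  case: k hk hk1 hk2 => [|k] // hk hk1 hk2.
  have hk3 : (m.+2 < k.+1)%N by move: hk hk1 hk2; rewrite !(inj_eq succn_inj); lia.
  rewrite /= (@pm_big m.+2 k.+1) // (@pm_big m.+1 k) ?(@pm_big m.+1 k.+1) ?(@pm_big m k.+1) //; try lia.
  by rewrite !mulr0 !addr0 subrr.
apply/polyP => k; rewrite coef0.
case: (leqP m.+1 k) => hk; first exact: hhi.
have hE : hankel_det (mom_st q) m != 0.
  by have [h _] := dets m.+1; rewrite lt0r_neq0.
apply: (@uniq0 R (mom_st q) m (fun k => D`_k) hE _ k hk) => i hi.
have hm3 : (m.+1 <= m.+3)%N by rewrite ltnW.
rewrite -(@sum_widen (fun k => mom_st q (i + k) * D`_k) m.+1 m.+3 hm3); last first.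
  by move=> j hj; rewrite hhi // mulr0.
under eq_bigr => j _ do rewrite hD !mulrDr mulrN.
rewrite !big_split /= sumrN.
have -> : \sum_(j < m.+3) mom_st q (i + j) * A`_j = 0.
  by rewrite /A (@orthL m.+2 m.+3 i) //; lia.
have -> : \sum_(j < m.+3) mom_st q (i + j) * (c * B`_j) =
          c * \sum_(j < m.+3) mom_st q (i + j) * B`_j.
  by rewrite mulr_sumr; apply: eq_bigr => j _; ring.
have -> : \sum_(j < m.+3) mom_st q (i + j) * B`_j = 0.
  by rewrite /B (@orthL m.+1 m.+3 i) //; lia.
have -> : \sum_(j < m.+3) mom_st q (i + j) * (l * C`_j) =
          l * \sum_(j < m.+3) mom_st q (i + j) * C`_j.
  by rewrite mulr_sumr; apply: eq_bigr => j _; ring.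
have -> : \sum_(j < m.+3) mom_st q (i + j) * (if (j : nat) == 0%N then 0 else B`_j.-1) =
          \sum_(j < m.+2) mom_st q (i.+1 + j) * B`_j.
  rewrite big_ord_recl /= mulr0 add0r; apply: eq_bigr => j _.
  by rewrite /bump /= addnS.
rewrite mulr0 addr0 sub0r.
have hC3 : (m.+1 <= m.+3)%N by rewrite ltnW.
case: (ltngtP i m) => [him|him|him].
- have e1 : \sum_(j < m.+2) mom_st q (i.+1 + j) * B`_j = 0 by apply: orthL.
  have e2 : \sum_(j < m.+3) mom_st q (i + j) * C`_j = 0 by apply: orthL.
  by rewrite e1 e2 mulr0 oppr0 addr0.
- by move: hi; rewrite leqNgt him.
- have e1 : \sum_(j < m.+2) mom_st q (i.+1 + j) * B`_j = q * Hs m.+1 by rewrite him; apply: hL.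
  have e2 : \sum_(j < m.+3) mom_st q (i + j) * C`_j = q * Hs m by rewrite him; apply: hL.
  rewrite e1 e2 /l lt_val.
  have h : Hs m != 0 by rewrite lt0r_neq0 // Hs_gt0.
  by field.
Qed.

Lemma alt_claim n k : (k <= n)%N ->
  Ct q n * alt n k = Ct q n * (-1) ^+ k * qbinom q n k
       * (q ^+ (k ^ 2) * (Num.sqrt q) ^+ k) / qpoch q q k.+1
       * (1 - q ^+ k.+1 - (1 - q ^+ k) * (1 - q ^+ n.+1)).
Proof.
move=> hk; rewrite /alt /wz hk /be -/(qp _).
have E : q ^+ (k ^ 2) * t ^+ k = q ^+ 'C(k, 2) * t ^+ (k ^ 2 + 2 * k).
  rewrite !qpow -!exprD; apply: tpow_eq; have := C2' k; nia.
rewrite E; ring.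
Qed.

Lemma bcoef_claim n k : (k <= n)%N ->
  Ct q n * (-1) ^+ k * qbinom q n k
       * (q ^+ (k ^ 2) * (Num.sqrt q) ^+ k) / qpoch q q k.+1
       * (1 - q ^+ k.+1 - (1 - q ^+ k) * (1 - q ^+ n.+1)) =
  bcoef q k n * (q ^+ n * Num.sqrt q)^-1
       * (1 - (1 - q ^+ k) * (1 - q ^+ n.+1) / (1 - q ^+ k.+1)).
Proof.
move=> hk; rewrite /Ct /bcoef -!/(qp _) qpS exprD.
have hr : Num.sqrt t ^+ 2 = t by rewrite sqr_sqrtr // ltW // t_gt0.
have hr0 : Num.sqrt t != 0 by rewrite lt0r_neq0 // sqrtr_gt0 t_gt0.
have hqn : q ^+ n = t ^+ n * t ^+ n by rewrite qpow -exprD; apply: tpow_eq; lia.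
have h1 := qp_neq0 k; have h2 := oneB_neq0 k.
rewrite hqn; move: (t ^+ n) (expf_neq0 n tn0) => T hT.
move: (Num.sqrt t) hr hr0 => r hr hr0.
rewrite -hr.
have hr2 : r ^+ 2 != 0 by rewrite expf_neq0.
by field; side.
Qed.

End Q.

Theorem corollary1 (R : rcfType) (q : R) (hq0 : 0 < q) (hq1 : q < 1) :
  (forall n k : nat, (k <= n)%N ->
     (orthonormal_poly (mom_st q) n)`_k =
       Ct q n * (-1) ^+ k * qbinom q n k
       * (q ^+ (k ^ 2) * (Num.sqrt q) ^+ k) / qpoch q q k.+1
       * (1 - q ^+ k.+1 - (1 - q ^+ k) * (1 - q ^+ n.+1))
     /\
     (orthonormal_poly (mom_st q) n)`_k =
       bcoef q k n * (q ^+ n * Num.sqrt q)^-1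
       * (1 - (1 - q ^+ k) * (1 - q ^+ n.+1) / (1 - q ^+ k.+1)))
  /\ (forall n : nat, hankel_det (mom_st q) n = q ^+ n.+1 * hankel_det (mom_s q) n)
  /\ (forall n : nat, (1 <= n)%N ->
        monic_pt q n =
          ('X - (ct q n)%:P) * monic_pt q n.-1
          - (lt_coef q n)%:P * (if n is 1 then 0 else monic_pt q n.-2)).
Proof.
split; [|split].
- move=> n k hk.
  have E1 := coefU hq0 hq1 hk.
  have E2 := alt_claim hq0 hq1 hk.
  split; first by rewrite E1 E2.
  by rewrite E1 E2 bcoef_claim.
- move=> n; have [_ [_ h3]] := dets hq0 hq1 n.+1; exact: h3.
- by move=> n hn; apply: recU.
Qed.
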